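(* For every integer $n\ge 1$, $$\rho(P_n)\le 1+\frac{n(n-1)}{2}-3\left\lfloor \frac{n}{7}\right\rfloor.$$
   Context: $P_n$ denotes the path on $n$ vertices (of length $n-1$). All graphs are finite and simple. A coloring means a proper vertex coloring; an induced subgraph is rainbow if all its vertices have pairwise different colors. $\rho(H)$ is the least number $m$ such that some graph $G$ on $m$ vertices has the property that every proper vertex coloring of $G$ contains a rainbow induced subgraph isomorphic to $H$. *)

(* Defs.v *)
From mathcomp Require Import all_boot.
Set Implicit Arguments. Unset Strict Implicit. Unset Printing Implicit Defensive.

Definition simple_graph (V : finType) (g : rel V) : Prop :=
  (forall x y, g x y = g y x) /\ (forall x, g x x = false).

Definition path_graph (n : nat) : rel 'I_n :=
  fun i j => (i.+1 == j :> nat) || (j.+1 == i :> nat).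

(* Proper vertex colouring (colours are natural numbers; any finite colour
   set can be encoded in nat). *)
Definition proper_coloring (V : finType) (g : rel V) (c : V -> nat) : Prop :=
  forall x y, g x y -> c x <> c y.

Definition rainbow_induced_copy (W V : finType) (h : rel W) (g : rel V)
    (c : V -> nat) (f : W -> V) : Prop :=
  [/\ injective f,
      (forall u v, g (f u) (f v) = h u v) &
      injective (fun u => c (f u))].

(* Some simple graph on m vertices forces a rainbow induced copy of h in
   every proper colouring.  rho(h) is the least m with this property. *)
Definition rainbow_forcing (W : finType) (h : rel W) (m : nat) : Prop :=
  exists g : rel 'I_m, simple_graph g /\
    forall c : 'I_m -> nat, proper_coloring g c ->
      exists f : W -> 'I_m, rainbow_induced_copy h g c f.

Definition rho_le (W : finType) (h : rel W) (B : nat) : Prop :=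
  exists2 m, m <= B & rainbow_forcing h m.

(* Main.v *)
Require Import Defs.
From mathcomp Require Import all_boot.
From mathcomp Require Import zify.
Set Implicit Arguments. Unset Strict Implicit. Unset Printing Implicit Defensive.
Section Hall.
Variables (I T : finType) (t0 : T).

Lemma hall_gen k : forall (D : {set I}) (A : I -> {set T}), #|D| <= k ->
  (forall J : {set I}, J \subset D -> #|J| <= #|\bigcup_(i in J) A i|) ->
  exists f : I -> T, {in D &, injective f} /\ {in D, forall i, f i \in A i}.
Proof.
elim: k => [|k IH] D A hD hH.
  have D0 : D = set0 by apply/eqP; rewrite -cards_eq0; lia.
  by exists (fun _ => t0); split => i; rewrite D0 inE.
case: (boolP [exists J : {set I}, [&& J \subset D, J != set0, J != D &
      #|\bigcup_(i in J) A i| <= #|J|]]).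
- case/existsP => J0 /and4P [sJ0 nJ0 neJ0 cJ0].
  have hJ0 : #|J0| <= k.
    have := proper_card (B := D) (A := J0); rewrite properEneq neJ0 sJ0 /=.
    move=> /(_ isT); lia.
  have [f1 [inj1 mem1]] := IH J0 A hJ0 (fun J sJ => hH J (subset_trans sJ sJ0)).
  set U := \bigcup_(i in J0) A i.
  have hD2 : #|D :\: J0| <= k.
    have := cardsD D J0; rewrite (setIidPr sJ0).
    have : 0 < #|J0| by rewrite card_gt0.
    lia.
  have hH2 : forall J : {set I}, J \subset D :\: J0 ->
      #|J| <= #|\bigcup_(i in J) (A i :\: U)|.
    move=> J sJ.
    have sJD : J :|: J0 \subset D.
      rewrite subUset sJ0 andbT; apply: subset_trans sJ _; exact: subsetDl.
    have h1 := hH _ sJD.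
    have /subsetDP [_ dJ] := sJ.
    have h2 : #|J :|: J0| = #|J| + #|J0|.
      by rewrite cardsU (disjoint_setI0 dJ) cards0 subn0.
    have h3 : \bigcup_(i in J :|: J0) A i \subset
              (\bigcup_(i in J) (A i :\: U)) :|: U.
      apply/subsetP => x /bigcupP [i]; rewrite inE => /orP [iJ|iJ0] xA.
        case xU: (x \in U); first by rewrite inE xU orbT.
        by rewrite inE; apply/orP; left; apply/bigcupP; exists i => //; rewrite inE xU.
      by rewrite inE; apply/orP; right; apply/bigcupP; exists i.
    have h4 := subset_leq_card h3.
    have h5 := leq_card_setU (\bigcup_(i in J) (A i :\: U)) U.
    move: h5 => [h5 _].
    have cU : #|U| <= #|J0| := cJ0. lia.
  have [f2 [inj2 mem2]] := IH _ _ hD2 hH2.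
  exists (fun i => if i \in J0 then f1 i else f2 i); split.
    move=> i j iD jD /=.
    have inU : forall l, l \in J0 -> f1 l \in U.
      by move=> l lJ; apply/bigcupP; exists l => //; apply: mem1.
    case iJ: (i \in J0); case jJ: (j \in J0).
    + exact: inj1.
    + move=> e; have := mem2 j; rewrite !inE jJ jD => /(_ isT) /andP [h _].
      by rewrite -e inU in h.
    + move=> e; have := mem2 i; rewrite !inE iJ iD => /(_ isT) /andP [h _].
      by rewrite e inU in h.
    + by apply: inj2; rewrite !inE ?iJ ?jJ ?iD ?jD.
  move=> i iD /=; case iJ: (i \in J0); first exact: mem1.
  have := mem2 i; rewrite !inE iJ iD => /(_ isT) /andP [] //.
- move=> hno.
  have hstrict : forall J : {set I}, J \subset D -> J != set0 -> J != D ->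
      #|J| < #|\bigcup_(i in J) A i|.
    move=> J sJ nJ neJ; rewrite ltnNge; apply/negP => c.
    by move/negP: hno; apply; apply/existsP; exists J; rewrite sJ nJ neJ c.
  case: (set_0Vmem D) => [D0|[i0 i0D]].
    by exists (fun _ => t0); split => i; rewrite D0 inE.
  have : 0 < #|A i0|.
    have := hH [set i0]; rewrite sub1set i0D big_set1 cards1; exact.
  rewrite card_gt0 => /set0Pn [x xA].
  have hD2 : #|D :\ i0| <= k.
    have := cardsD1 i0 D; rewrite i0D; lia.
  have hH2 : forall J : {set I}, J \subset D :\ i0 ->
      #|J| <= #|\bigcup_(i in J) (A i :\ x)|.
    move=> J sJ.
    case: (set_0Vmem J) => [->|[j jJ]]; first by rewrite cards0.
    have sJD : J \subset D by apply: subset_trans sJ (subsetDl _ _).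
    have neJ : J != D.
      apply/eqP => e; have := subsetP sJ i0; rewrite e i0D => /(_ isT).
      by rewrite !inE eqxx.
    have nJ : J != set0 by apply/set0Pn; exists j.
    have h1 := hstrict J sJD nJ neJ.
    have h3 : \bigcup_(i in J) A i \subset (\bigcup_(i in J) (A i :\ x)) :|: [set x].
      apply/subsetP => y /bigcupP [i iJ yA].
      case yx: (y == x); first by rewrite !inE yx orbT.
      by rewrite inE; apply/orP; left; apply/bigcupP; exists i => //; rewrite !inE yx.
    have h4 := subset_leq_card h3.
    have [h5 _] := leq_card_setU (\bigcup_(i in J) (A i :\ x)) [set x].
    move: h5; rewrite cards1 => h5.
    lia.
  have [f2 [inj2 mem2]] := IH _ _ hD2 hH2.
  exists (fun i => if i == i0 then x else f2 i); split.
    move=> i j iD jD /=.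
    case: (eqVneq i i0) => [->|ni]; case: (eqVneq j i0) => [->|nj] //.
    + move=> e; have := mem2 j; rewrite !inE nj jD => /(_ isT) /andP [h _].
      by rewrite -e eqxx in h.
    + move=> e; have := mem2 i; rewrite !inE ni iD => /(_ isT) /andP [h _].
      by rewrite e eqxx in h.
    + by apply: inj2; rewrite !inE ?ni ?nj ?iD ?jD.
  move=> i iD /=; case: (eqVneq i i0) => [->|ni] //.
  have := mem2 i; rewrite !inE ni iD => /(_ isT) /andP [] //.
Qed.
End Hall.

Definition cond n (s : nat -> nat) := forall J : {set 'I_n}, J != set0 ->
  (exists2 j : 'I_n, j \in J & #|J| <= s j) \/
  (exists j j' : 'I_n, [/\ j \in J, j' \in J, (j : nat).+1 = j' & #|J| <= s j + s j']).

Section Cons.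
Variables (n : nat) (s : nat -> nat).
Definition V := {j : 'I_n & 'I_(s j)}.
Definition tg (j : 'I_n) (k : 'I_(s j)) : V := Tagged (fun i : 'I_n => 'I_(s i)) k.
Definition adjL (i j : nat) := [|| i == j, i.+1 == j | j.+1 == i].
Definition gV (u v : V) := (u != v) && adjL (tag u) (tag v).
Definition gm (x y : 'I_#|{: V}|) := gV (enum_val x) (enum_val y).

Lemma adjLC i j : adjL i j = adjL j i.
Proof. by rewrite /adjL eq_sym; congr orb; rewrite orbC. Qed.

Lemma gm_simple : simple_graph gm.
Proof.
split => [x y|x]; rewrite /gm /gV ?eqxx //.
by rewrite eq_sym adjLC.
Qed.

Lemma forcing : cond n s -> rainbow_forcing (@path_graph n) #|{: V}|.
Proof.
move=> hcond; exists gm; split; first exact: gm_simple.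
move=> c hc.
pose cV (v : V) := c (enum_rank v).
have pV : forall u v, gV u v -> cV u <> cV v.
  by move=> u v huv; apply: hc; rewrite /gm !enum_rankK.
pose M := \max_(v : V) cV v.
pose col (v : V) : 'I_M.+1 := inord (cV v).
have colE : forall v, (col v : nat) = cV v.
  by move=> v; rewrite inordK // ltnS; apply: leq_bigmax.
have colI : forall u v, gV u v -> col u != col v.
  move=> u v huv; apply/eqP => e; apply: (pV u v huv).
  by rewrite -!colE e.
pose A (j : 'I_n) := [set col (tg k) | k : 'I_(s j)].
have cardA : forall j, #|A j| = s j.
  move=> j; rewrite card_imset ?card_ord //.
  move=> k k' e; apply: (@eq_from_Tagged _ (fun i : 'I_n => 'I_(s i))).
  apply/eqP; apply: contraT => ne.
  have := colI (tg k) (tg k'); rewrite /gV.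
  have -> : tg k != tg k' := ne.
  rewrite /adjL /= eqxx => /(_ isT).
  by rewrite e eqxx.
have disjA : forall j j' : 'I_n, (j : nat).+1 = j' -> A j :&: A j' = set0.
  move=> j j' e; apply/eqP; rewrite -subset0; apply/subsetP => x.
  rewrite inE => /andP [/imsetP [k _ ->] /imsetP [k' _ e']].
  have : gV (tg k) (tg k').
    rewrite /gV /adjL /= e eqxx !orbT andbT.
    apply/eqP => ee; have := congr1 (fun v : V => (tag v : nat)) ee; rewrite /= -e.
    by apply: n_Sn.
  by move/colI; rewrite e' eqxx.
have hall0 := @hall_gen 'I_n 'I_M.+1 ord0 #|[set: 'I_n]| setT A (leqnn _).
have [|f [finj fmem]] := hall0.
  move=> J _; case: (eqVneq J set0) => [->|nJ]; first by rewrite cards0.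
  case: (hcond J nJ) => [[j jJ hj]|[j [j' [jJ j'J e hj]]]].
    apply: (leq_trans hj); rewrite -cardA; apply: subset_leq_card.
    exact: (bigcup_sup j jJ).
  apply: (leq_trans hj).
  have : #|A j :|: A j'| = s j + s j' by rewrite cardsU disjA // cards0 subn0 !cardA.
  move <-; apply: subset_leq_card; rewrite subUset.
  by rewrite (bigcup_sup j jJ) (bigcup_sup j' j'J).
have ex : forall j : 'I_n, exists v : V, (tag v == j) && (col v == f j).
  move=> j; have /imsetP [k _ ek] := fmem j (in_setT j).
  by exists (tg k); rewrite /= eqxx ek eqxx.
pose w j := xchoose (ex j).
have wtag : forall j, tag (w j) = j.
  by move=> j; have /andP [/eqP -> _] := xchooseP (ex j).
have wcol : forall j, col (w j) = f j.
  by move=> j; have /andP [_ /eqP ->] := xchooseP (ex j).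
exists (fun j => enum_rank (w j)); split.
- move=> j j' /enum_rank_inj e.
  by rewrite -(wtag j) -(wtag j') e.
- move=> u v; rewrite /gm !enum_rankK /gV /adjL !wtag /path_graph.
  case: (eqVneq u v) => [->|ne].
    by rewrite eqxx /= ; case: (v : nat) => //= k; rewrite !eqn_leq !ltnn ?andbF.
  have -> : (w u != w v).
    by apply/eqP => e; move: ne; rewrite -(wtag u) -(wtag v) e eqxx.
  by rewrite /= (_ : ((u : nat) == v) = false) //; apply/negbTE; move: ne; apply: contra => /eqP e; apply/eqP/val_inj.
- move=> u v /= e.
  have : col (w u) = col (w v) by apply: val_inj; rewrite /= !colE.
  rewrite !wcol => /eqP; rewrite (inj_in_eq finj) ?in_setT // => /eqP.
  done.
Qed.
End Cons.

Lemma card_le_seq n (J : {set 'I_n}) (S : seq nat) :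
  (forall j : 'I_n, j \in J -> (j : nat) \in S) -> #|J| <= size S.
Proof.
move=> h; rewrite cardE -(size_map val).
apply: uniq_leq_size; first by rewrite (map_inj_uniq val_inj) enum_uniq.
by move=> x /mapP [j]; rewrite mem_enum => jJ ->; apply: h.
Qed.

Definition sA (j : nat) := if j == 0 then 1 else if j < 5 then j else j - 1.

Lemma sA_small j : j <= 4 -> sA j = maxn 1 j.
Proof. rewrite /sA; case: eqP => [->|] //; case: ifP => //; lia. Qed.
Lemma sA_big j : 5 <= j -> sA j = j - 1.
Proof. rewrite /sA; case: eqP => [->|] //; case: ifP => //; lia. Qed.

Lemma sA_pair m : 1 <= m -> m.+1 <= sA m.-1 + sA m.
Proof.
move=> hm; case: (leqP m 4) => h4.
  rewrite !sA_small; lia.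
case: (leqP m 5) => h5.
  rewrite (@sA_big m) // (@sA_small m.-1); lia.
rewrite !sA_big; lia.
Qed.

Lemma sA_pair3 m : 5 <= m -> m <= sA (m - 3) + sA (m - 2).
Proof.
move=> hm; case: (leqP m 6) => h6.
  rewrite !sA_small; lia.
case: (leqP m 7) => h7.
  rewrite (@sA_small (m-3)) ?(@sA_big (m-2)); lia.
rewrite !sA_big; lia.
Qed.

Definition inJ n (J : {set 'I_n}) (k : nat) := [exists j in J, (j : nat) == k].

Lemma inJP n (J : {set 'I_n}) k : inJ J k -> exists2 j : 'I_n, j \in J & (j : nat) = k.
Proof. by case/existsP => j /andP [jJ /eqP e]; exists j. Qed.

Lemma inJN n (J : {set 'I_n}) k : ~~ inJ J k -> forall j : 'I_n, j \in J -> (j : nat) != k.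
Proof.
move=> h j jJ; apply/negP => /eqP e; move/negP: h; apply.
by apply/existsP; exists j; rewrite jJ e eqxx.
Qed.

Lemma condA n : cond n sA.
Proof.
move=> J /set0Pn [j0 j0J].
have [m mJ mmax] : exists2 m : 'I_n, m \in J & forall j : 'I_n, j \in J -> j <= m.
  case: (arg_maxnP (fun j : 'I_n => (j : nat)) j0J) => m mJ h.
  by exists m.
case h1 : ((0 < m) && inJ J m.-1).
  move/andP: h1 => [m0 /inJP [j1 j1J e1]].
  right; exists j1, m; split => //; first by rewrite e1 prednK.
  apply: (@leq_trans (size (iota 0 m.+1))).
    apply: card_le_seq => j jJ; rewrite mem_iota; have := mmax j jJ; lia.
  by rewrite size_iota e1; apply: sA_pair.
have hS : forall j : 'I_n, j \in J -> (m == 0 :> nat) || ((j : nat) != m.-1).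
  move=> j jJ; move/negbT: h1; rewrite negb_and -eqn0Ngt => /orP [->//|h].
  by rewrite (inJN h jJ) orbT.
have c1 : #|J| <= m.-1.+1.
  apply: (@leq_trans (size (iota 0 m.-1 ++ [:: (m : nat)]))).
    apply: card_le_seq => j jJ; rewrite mem_cat mem_iota !inE.
    have := mmax j jJ; have := hS j jJ; lia.
  by rewrite size_cat size_iota /= addn1.
case: (leqP m 4) => hm4.
  by left; exists m => //; rewrite sA_small //; lia.
case h2 : (inJ J (m - 2)); last first.
  left; exists m => //; rewrite sA_big //.
  apply: (@leq_trans (size (iota 0 (m - 2) ++ [:: (m : nat)]))).
    apply: card_le_seq => j jJ; rewrite mem_cat mem_iota !inE.
    have := mmax j jJ; have := hS j jJ; have := inJN (negbT h2) jJ; lia.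
  by rewrite size_cat size_iota /=; lia.
case h3 : (inJ J (m - 3)); last first.
  left; exists m => //; rewrite sA_big //.
  apply: (@leq_trans (size (iota 0 (m - 3) ++ [:: (m - 2); (m : nat)]))).
    apply: card_le_seq => j jJ; rewrite mem_cat mem_iota !inE.
    have := mmax j jJ; have := hS j jJ; have := inJN (negbT h3) jJ; lia.
  by rewrite size_cat size_iota /=; lia.
have [j3 j3J e3] := inJP h3.
have [j2 j2J e2] := inJP h2.
right; exists j3, j2; split => //; first by rewrite e3 e2; lia.
rewrite e3 e2; apply: leq_trans (sA_pair3 hm4); lia.
Qed.
Definition condb (s : nat -> nat) (b : seq bool) : bool :=
  has (fun i => nth false b i && (count id b <= s i)) (iota 0 (size b)) ||
  has (fun i => [&& nth false b i, nth false b i.+1 & count id b <= s i + s i.+1])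
      (iota 0 (size b)).

Lemma cnt n (J : {set 'I_n}) : count (mem J) (enum 'I_n) = #|J|.
Proof. rewrite cardE /enum_mem size_filter /= count_filter. apply: eq_count => x /=. by rewrite andbT. Qed.

Lemma condb_cond n s :
  (forall b, size b = n -> 0 < count id b -> condb s b) -> cond n s.
Proof.
move=> h J /set0Pn [j0 j0J].
pose b := [seq j \in J | j <- enum 'I_n].
have sb : size b = n by rewrite size_map size_enum_ord.
have cb : count id b = #|J| by rewrite count_map -cnt.
have nb : forall i, i < n -> nth false b i = (nth j0 (enum 'I_n) i \in J).
  by move=> i hi; rewrite (nth_map j0) // size_enum_ord.
have Jn : J != set0 by apply/set0Pn; exists j0.
have := h b sb; rewrite cb card_gt0 => /(_ Jn).
case/orP => /hasP [i]; rewrite mem_iota sb add0n leq0n /= => hi.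
  rewrite nb // => /andP [iJ c].
  left; exists (nth j0 (enum 'I_n) i) => //.
  by rewrite nth_enum_ord // -cb.
case/and3P => bi bi1 c.
have hi1 : i.+1 < n.
  by rewrite ltnNge; apply/negP => hh; move: bi1; rewrite nth_default // sb.
move: bi bi1; rewrite !nb // => iJ i1J.
right; exists (nth j0 (enum 'I_n) i), (nth j0 (enum 'I_n) i.+1).
by rewrite !nth_enum_ord // -cb; split.
Qed.

Definition s7 (j : nat) := nth 0 [:: 1; 2; 3; 4; 2; 2; 4] j.

Lemma cond7 : cond 7 s7.
Proof.
apply: condb_cond => b.
case: b => [|b0 [|b1 [|b2 [|b3 [|b4 [|b5 [|b6 [|b7 b]]]]]]]] //= _.
by case: b0; case: b1; case: b2; case: b3; case: b4; case: b5; case: b6.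
Qed.
Fixpoint Sum (s : nat -> nat) n := if n is k.+1 then Sum s k + s k else 0.

Lemma cardV n s : #|{: V n s}| = Sum s n.
Proof.
rewrite /V card_tagged.
have -> : [seq #|'I_(s i)| | i : 'I_n <- enum 'I_n] = map s (map val (enum 'I_n)).
  by rewrite -map_comp; apply: eq_map => i /=; rewrite card_ord.
rewrite val_enum_ord; elim: n => // n IH.
by rewrite -addn1 iotaD map_cat sumn_cat IH /= addn0 add0n addn1.
Qed.

Lemma SumA n : 5 <= n -> 2 * Sum sA n + 2 * n = n * (n - 1) + 12.
Proof.
elim: n => // n IH h.
case: (leqP n 4) => hn.
  have -> : n = 4 by lia.
  by [].
rewrite /= (sA_big hn); have := IH hn; nia.
Qed.

Lemma boundA n : 1 <= n -> n != 7 -> Sum sA n <= 1 + n * (n - 1) %/ 2 - 3 * (n %/ 7).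
Proof.
move=> h1 h7.
case: (leqP n 4) => hn.
  have : [|| n == 1, n == 2, n == 3 | n == 4] by lia.
  by case/or4P => /eqP ->.
have e2 : (n * (n - 1)) %% 2 = 0.
  rewrite modn2 oddM; case: n hn {h1 h7} => // n _.
  by rewrite subn1 /=; case: (odd n).
have := SumA hn.
move: (n * (n - 1)) e2 => P e2 hS.
have := divn_eq P 2.
move: (P %/ 2) => q hq.
lia.
Qed.

Unset Implicit Arguments.
Theorem corollary5p2 (n : nat) : 1 <= n ->
  rho_le (@path_graph n) (1 + n * (n - 1) %/ 2 - 3 * (n %/ 7)).
Proof.
move=> h1; case: (eqVneq n 7) => [->|h7].
  exists #|{: V 7 s7}|; first by rewrite cardV.
  exact: (@forcing 7 s7 cond7).
exists #|{: V n sA}|; first by rewrite cardV; apply: boundA.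
exact: (@forcing n sA (@condA n)).
Qed.
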